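(* If $(G,u,v)$ is a twice-marked graph of genus $g$ with $k$-general transmission and $k\ge \frac12 g+1$, then $G$ (forgetting the marked points) is Brill–Noether general.
   Context: A graph is a finite, connected, loopless multigraph (parallel edges allowed); its genus is $g=|E(G)|-|V(G)|+1$. A divisor is an element of the free abelian group on $V(G)$. Linear equivalence $\sim$ is generated by chip-firing (firing $w$ subtracts $\mathrm{val}(w)$ chips from $w$ and adds to each other vertex the number of edges joining it to $w$). The rank $r(D)$ is $-1$ if $D$ is not equivalent to an effective divisor, else the largest $r\ge0$ such that $D-E$ is equivalent to an effective divisor for every effective $E$ of degree $r$. $\delta(P)$ is $1$ if $P$ holds and $0$ otherwise. A twice-marked graph $(G,u,v)$ is a graph with two chosen vertices. A twist of $D$ is $D+au+bv$. $\Delta(D)=r(D)-r(D-u)-r(D-v)+r(D-u-v)$. $D$ is submodular if $\Delta(D')\ge0$ for all twists $D'$. If $D$ is submodular, its transmission permutation $\tau^{u,v}_D$ is the unique bijection $\mathbb Z\to\mathbb Z$ with $\delta(\tau^{u,v}_D(b)=a)=\Delta(D+au-bv)$ for all $a,b$. An inversion of a bijection $\tau$ is a pair $(a,b)$ with $a<b$, $\tau(a)>\tau(b)$; two inversions $(a,b),(a',b')$ are $k$-equivalent if $a-a'=b-b'\equiv0\pmod k$; $\mathrm{inv}_k(\tau)$ is the number of classes. A genus-$g$ twice-marked graph has $k$-general transmission if $ku\sim kv$, every divisor is submodular, and $\mathrm{inv}_k(\tau^{u,v}_D)\le g$ for every divisor $D$. A graph $G$ of genus $g$ is Brill–Noether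 general if for every divisor $D$ and every integer $r$ with $0\le r\le r(D)$, $g-(r+1)(g-\deg D+r)\ge0$. *)

(* Defs.v *)
From mathcomp Require Import all_boot all_order all_algebra.
From Stdlib Require Import ClassicalEpsilon.
Set Implicit Arguments. Unset Strict Implicit. Unset Printing Implicit Defensive.
Import Order.TTheory GRing.Theory Num.Theory.
Local Open Scope ring_scope.

(* A (loopless, finite, connected) multigraph on the finite vertex type V is
   given by its symmetric edge-multiplicity function m : V -> V -> nat,
   m x y = number of edges joining x and y. *)
Definition is_graph (V : finType) (m : V -> V -> nat) : Prop :=
  [/\ (forall x y, m x y = m y x),
      (forall x, m x x = 0%N) &
      (forall x y, connect (fun a b => (0 < m a b)%N) x y)].

(* number of edges: each edge counted twice in the double sum *)
Definition num_edges (V : finType) (m : V -> V -> nat) : nat :=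
  (\sum_(x : V) \sum_(y : V) m x y)%N./2.

Definition genus (V : finType) (m : V -> V -> nat) : int :=
  (num_edges m)%:Z - (#|V|)%:Z + 1.

Definition divisor (V : finType) := V -> int.

Definition deg (V : finType) (D : divisor V) : int := \sum_(x : V) D x.

Definition effective (V : finType) (D : divisor V) : Prop := forall x, 0 <= D x.

Definition valence (V : finType) (m : V -> V -> nat) (w : V) : nat :=
  (\sum_(x : V) m w x)%N.

Definition fire (V : finType) (m : V -> V -> nat) (w : V) : divisor V :=
  fun x => if x == w then - (valence m w)%:Z else (m x w)%:Z.

(* linear equivalence: equivalence relation generated by chip-firing moves,
   i.e. D' is obtained from D by firing each vertex w an integer number c w
   of times (negative = reverse firing). *)
Definition lin_equiv (V : finType) (m : V -> V -> nat) (D D' : divisor V) : Prop :=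
  exists c : V -> int, forall x, D' x = D x + \sum_(w : V) c w * fire m w x.

Definition add_at (V : finType) (D : divisor V) (a : int) (p : V) : divisor V :=
  fun x => D x + (if x == p then a else 0).

Definition sub_div (V : finType) (D E : divisor V) : divisor V :=
  fun x => D x - E x.

Definition equiv_eff (V : finType) (m : V -> V -> nat) (D : divisor V) : Prop :=
  exists D', lin_equiv m D D' /\ effective D'.

Definition rank_ge (V : finType) (m : V -> V -> nat) (D : divisor V) (r : nat) : Prop :=
  forall E : divisor V, effective E -> deg E = r%:Z -> equiv_eff m (sub_div D E).

Definition pbool (P : Prop) : bool :=
  if excluded_middle_informative P then true else false.

(* rank: -1 if D is not equivalent to an effective divisor; otherwise the
   largest r >= 0 with rank_ge D r.  Such r never exceeds deg D (linear
   equivalence preserves degree), so the max over r <= |deg D| is the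
   largest one overall. *)
Definition rank (V : finType) (m : V -> V -> nat) (D : divisor V) : int :=
  if pbool (equiv_eff m D)
  then (\max_(r < (absz (deg D)).+1 | pbool (rank_ge m D r)) (r : nat))%N%:Z
  else -1.

Definition Delta (V : finType) (m : V -> V -> nat) (u v : V) (D : divisor V) : int :=
  rank m D - rank m (add_at D (-1) u) - rank m (add_at D (-1) v)
  + rank m (add_at (add_at D (-1) u) (-1) v).

Definition twist (V : finType) (u v : V) (D : divisor V) (a b : int) : divisor V :=
  add_at (add_at D a u) b v.

Definition submodular (V : finType) (m : V -> V -> nat) (u v : V) (D : divisor V) : Prop :=
  forall a b : int, 0 <= Delta m u v (twist u v D a b).

Definition is_transmission_perm (V : finType) (m : V -> V -> nat) (u v : V)
    (D : divisor V) (tau : int -> int) : Prop :=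
  bijective tau /\
  forall a b : int, ((tau b == a) : nat)%:Z = Delta m u v (twist u v D a (- b)).

Definition inversion (tau : int -> int) (p : int * int) : Prop :=
  p.1 < p.2 /\ tau p.2 < tau p.1.

Definition k_equiv (k : nat) (p q : int * int) : Prop :=
  p.1 - q.1 = p.2 - q.2 /\ (k%:Z %| (p.1 - q.1))%Z.

(* inv_k(tau) <= n : the inversions of tau fall into at most n
   k-equivalence classes, i.e. there are at most n inversions such that
   every inversion is k-equivalent to one of them. *)
Definition inv_k_le (k : nat) (tau : int -> int) (n : int) : Prop :=
  exists s : seq (int * int),
    (size s)%:Z <= n /\ (forall p, p \in s -> inversion tau p) /\
    forall p, inversion tau p -> exists2 q, q \in s & k_equiv k p q.

Definition k_general_transmission (V : finType) (m : V -> V -> nat) (u v : V)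
    (k : nat) : Prop :=
  [/\ lin_equiv m (add_at (fun _ => 0) k%:Z u) (add_at (fun _ => 0) k%:Z v),
      (forall D : divisor V, submodular m u v D) &
      (forall D : divisor V, exists tau, is_transmission_perm m u v D tau /\
                                          inv_k_le k tau (genus m))].

Definition BN_general (V : finType) (m : V -> V -> nat) : Prop :=
  forall (D : divisor V) (r : int), 0 <= r -> r <= rank m D ->
    0 <= genus m - (r + 1) * (genus m - deg D + r).

(* Main.v *)
Require Import Defs.
From mathcomp Require Import all_boot all_order all_algebra.
From mathcomp Require Import zify ring lra.
From Stdlib Require Import FunctionalExtensionality ClassicalEpsilon.
Import Order.TTheory GRing.Theory Num.Theory.
Local Open Scope ring_scope.
Set Implicit Arguments. Unset Strict Implicit. Unset Printing Implicit Defensive.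

Lemma sumz (I : Type) (r : seq I) (P : pred I) (F : I -> nat) :
  ((\sum_(i <- r | P i) F i)%N)%:Z = \sum_(i <- r | P i) (F i)%:Z.
Proof. by elim/big_rec2: _ => // i a b _ <-; rewrite PoszD. Qed.

Section Basics.
Variables (V : finType) (m : V -> V -> nat).
Hypothesis msym : forall x y, m x y = m y x.
Hypothesis mdiag : forall x, m x x = 0%N.

Definition Lap (c : V -> int) (x : V) : int := \sum_(w : V) c w * fire m w x.

Lemma Lap_add c1 c2 x : Lap (fun w => c1 w + c2 w) x = Lap c1 x + Lap c2 x.
Proof. by rewrite /Lap -big_split /=; apply: eq_bigr => w _; rewrite mulrDl. Qed.

Lemma Lap_scale (a : int) c x : Lap (fun w => a * c w) x = a * Lap c x.
Proof. by rewrite /Lap mulr_sumr; apply: eq_bigr => w _; rewrite mulrA. Qed.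

Lemma Lap_opp c x : Lap (fun w => - c w) x = - Lap c x.
Proof. by rewrite /Lap -sumrN; apply: eq_bigr => w _; rewrite mulNr. Qed.

Lemma Lap0 x : Lap (fun _ => 0) x = 0.
Proof. by rewrite /Lap big1 // => w _; rewrite mul0r. Qed.

Lemma lin_equivE (D D' : divisor V) : lin_equiv m D D' <-> exists c, forall x, D' x = D x + Lap c x.
Proof. by []. Qed.

Lemma lin_equiv_refl (D : divisor V) : lin_equiv m D D.
Proof. by exists (fun _ => 0) => x; rewrite -/(Lap _ x) Lap0 addr0. Qed.

Lemma lin_equiv_sym (D D' : divisor V) : lin_equiv m D D' -> lin_equiv m D' D.
Proof.
case=> c Hc; exists (fun w => - c w) => x; rewrite -/(Lap _ x) Lap_opp Hc -/(Lap c x).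
by rewrite addrK.
Qed.

Lemma lin_equiv_trans (D1 D2 D3 : divisor V) : lin_equiv m D1 D2 -> lin_equiv m D2 D3 -> lin_equiv m D1 D3.
Proof.
case=> c1 H1 [c2 H2]; exists (fun w => c1 w + c2 w) => x.
rewrite -/(Lap _ x) Lap_add H2 -/(Lap c2 x) H1 -/(Lap c1 x); by rewrite addrA.
Qed.

Lemma lin_equiv_shift (D D' X : divisor V) :
  lin_equiv m D D' -> lin_equiv m (fun x => D x + X x) (fun x => D' x + X x).
Proof. case=> c H; exists c => x; rewrite H; ring. Qed.

Lemma sum_fire w : \sum_(x : V) fire m w x = 0.
Proof.
rewrite (bigD1 w) //= /fire eqxx.
rewrite (eq_bigr (fun x => (m w x)%:Z)); last first.
  by move=> x /negbTE ->; rewrite msym.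
rewrite /valence (bigD1 w) //= mdiag add0n (big_morph Posz PoszD (erefl _)).
by rewrite addrC subrr.
Qed.

Lemma deg_Lap c : deg (Lap c) = 0.
Proof.
rewrite /deg /Lap exchange_big /= big1 // => w _.
by rewrite -mulr_sumr sum_fire mulr0.
Qed.

Lemma deg_add (D X : divisor V) : deg (fun x => D x + X x) = deg D + deg X.
Proof. by rewrite /deg big_split. Qed.

Lemma deg_opp (D : divisor V) : deg (fun x => - D x) = - deg D.
Proof. by rewrite /deg sumrN. Qed.

Lemma deg_sub (D E : divisor V) : deg (sub_div D E) = deg D - deg E.
Proof. by rewrite /sub_div /deg sumrB. Qed.

Lemma deg_add_at (D : divisor V) a p : deg (add_at D a p) = deg D + a.
Proof.
rewrite /add_at deg_add; congr (_ + _).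
by rewrite /deg (bigD1 p) //= eqxx big1 ?addr0 // => x /negbTE ->.
Qed.

Lemma lin_equiv_deg (D D' : divisor V) : lin_equiv m D D' -> deg D' = deg D.
Proof.
case=> c H; rewrite /deg (eq_bigr (fun x => D x + Lap c x)); last by move=> x _; rewrite H.
by rewrite big_split /= -/(deg (Lap c)) deg_Lap addr0.
Qed.

Lemma eff_deg (D : divisor V) : effective D -> 0 <= deg D.
Proof. by move=> H; rewrite /deg sumr_ge0. Qed.

Lemma equiv_eff_deg (D : divisor V) : equiv_eff m D -> 0 <= deg D.
Proof. by case=> D' [/lin_equiv_deg <-]; apply: eff_deg. Qed.

Lemma equiv_eff_lin (D D' : divisor V) : lin_equiv m D D' -> equiv_eff m D' -> equiv_eff m D.
Proof. by move=> H [F [H2 HF]]; exists F; split=> //; apply: lin_equiv_trans H H2. Qed.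

Lemma sub_div_lin (D D' E : divisor V) : lin_equiv m D D' -> lin_equiv m (sub_div D E) (sub_div D' E).
Proof. by move=> H; apply: (lin_equiv_shift (fun x => - E x) H). Qed.

Lemma rank_ge_lin (D D' : divisor V) r : lin_equiv m D D' -> rank_ge m D r -> rank_ge m D' r.
Proof.
move=> H HD E HE dE; apply: (equiv_eff_lin (D := sub_div D' E) (D' := sub_div D E)).
  by apply: sub_div_lin; apply: lin_equiv_sym.
by apply: HD.
Qed.

Lemma pboolP (P : Prop) : pbool P = true <-> P.
Proof. by rewrite /pbool; case: excluded_middle_informative. Qed.

Lemma pbool_iff (P Q : Prop) : (P <-> Q) -> pbool P = pbool Q.
Proof.
move=> H; rewrite /pbool.
case: (excluded_middle_informative P) => p; case: (excluded_middle_informative Q) => q //.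
- by exfalso; apply: q; apply H.
- by exfalso; apply: p; apply H.
Qed.

Lemma rank_lin (D D' : divisor V) : lin_equiv m D D' -> rank m D = rank m D'.
Proof.
move=> H; rewrite /rank (lin_equiv_deg H).
have -> : pbool (equiv_eff m D) = pbool (equiv_eff m D').
  apply: pbool_iff; split; first by apply: equiv_eff_lin; apply: lin_equiv_sym.
  by apply: equiv_eff_lin.
case: (pbool _) => //; congr (_ %:Z); apply: eq_bigl => r.
apply: pbool_iff; split; first by apply: rank_ge_lin.
by apply: rank_ge_lin; apply: lin_equiv_sym.
Qed.

Lemma eff_deg0 (E : divisor V) : effective E -> deg E = 0 -> forall x, E x = 0.
Proof.
move=> HE d0 x; move: d0; rewrite /deg => /eqP; rewrite psumr_eq0 //.
by move=> /allP/(_ x (mem_index_enum x)) /implyP /(_ isT) /eqP.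
Qed.

Lemma rank_ge0 (D : divisor V) : rank_ge m D 0 <-> equiv_eff m D.
Proof.
split.
  move=> H; have := H (fun _ => 0); rewrite /sub_div.
  have -> : (fun x => D x - 0) = D by apply: functional_extensionality => x; rewrite subr0.
  by apply=> // ; rewrite /deg big1.
move=> H E HE dE; have := eff_deg0 HE dE => E0.
rewrite /sub_div; have -> : (fun x => D x - E x) = D.
  by apply: functional_extensionality => x; rewrite E0 subr0.
done.
Qed.

Lemma equiv_eff_add_eff (D X : divisor V) : equiv_eff m D -> effective X -> equiv_eff m (fun x => D x + X x).
Proof.
case=> F [H HF] HX; exists (fun x => F x + X x); split.
  by apply: lin_equiv_shift.
by move=> x; rewrite addr_ge0.
Qed.

Lemma add_at_eff (D : divisor V) a p : effective D -> 0 <= a -> effective (add_at D a p).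
Proof. by move=> H ha x; rewrite /add_at addr_ge0 //; case: eqP. Qed.

Lemma rank_ge_down (x0 : V) (D : divisor V) s : rank_ge m D s.+1 -> rank_ge m D s.
Proof.
move=> H E HE dE.
have HE' : effective (add_at E 1 x0) := add_at_eff x0 HE ler01.
have dE' : deg (add_at E 1 x0) = s.+1%:Z by rewrite deg_add_at dE -addn1 PoszD.
have := H _ HE' dE' => /equiv_eff_add_eff /(_ (add_at_eff x0 (fun _ => lexx 0) ler01)).
have -> // : (fun x => sub_div D (add_at E 1 x0) x + add_at (fun _ => 0) 1 x0 x) = sub_div D E.
by apply: functional_extensionality => x; rewrite /sub_div /add_at; ring.
Qed.

Lemma rank_ge_le (x0 : V) (D : divisor V) r s : rank_ge m D r -> (s <= r)%N -> rank_ge m D s.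
Proof.
move=> H Hsr; move: H; rewrite -(subnK Hsr); elim: (r - s)%N => [|n IH] H.
  by rewrite add0n in H.
by apply: IH; apply: (rank_ge_down x0); rewrite -addSn.
Qed.

Lemma rank_ge_deg (x0 : V) (D : divisor V) s : rank_ge m D s -> s%:Z <= deg D.
Proof.
move=> H; have HE : effective (add_at (fun _ => 0) s%:Z x0) by apply: add_at_eff.
have dE : deg (add_at (fun _ => 0) s%:Z x0) = s%:Z.
  by rewrite deg_add_at /deg big1 // add0r.
have := equiv_eff_deg (H _ HE dE); rewrite deg_sub dE subr_ge0 //.
Qed.

Lemma rank_geP (x0 : V) (D : divisor V) (s : nat) : (s%:Z <= rank m D) <-> rank_ge m D s.
Proof.
rewrite /rank; case: (boolP (pbool (equiv_eff m D))) => [/pboolP He|He].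
  split.
    move=> Hs; case: (boolP (pbool (rank_ge m D s))) => [/pboolP //|Hn].
    have s0 : (0 < s)%N.
      case: s Hs Hn => // Hs Hn; exfalso; move/negP: Hn; apply; apply/pboolP.
      by apply/rank_ge0.
    exfalso; move: Hs; rewrite lez_nat; apply/negP; rewrite -ltnNge.
    suff : (\max_(r < (absz (deg D)).+1 | pbool (rank_ge m D r)) r <= s.-1)%N by lia.
    apply/bigmax_leqP => r /pboolP Hr.
    suff : (r < s)%N by lia.
    rewrite ltnNge; apply/negP => Hsr; move/negP: Hn; apply; apply/pboolP; exact: (@rank_ge_le x0 D r s Hr Hsr).
  move=> Hs; rewrite lez_nat.
  have sN : (s < (absz (deg D)).+1)%N.
    rewrite ltnS; have := rank_ge_deg x0 Hs => h; rewrite -lez_nat.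
    by rewrite gez0_abs // (le_trans _ h).
  apply: (@leq_bigmax_cond _ (fun r : ordinal _ => pbool (rank_ge m D r)) (fun r : ordinal _ => nat_of_ord r) (Ordinal sN)); exact/pboolP.
split => //.
move=> Hs; exfalso; move/negP: He; apply; apply/pboolP; apply/rank_ge0.
exact: (@rank_ge_le x0 D s 0 Hs (leq0n s)).
Qed.


Lemma rank_ge_m1 (D : divisor V) : -1 <= rank m D.
Proof. by rewrite /rank; case: (pbool _). Qed.

Lemma rank_neg (D : divisor V) : deg D < 0 -> rank m D = -1.
Proof.
move=> Hd; rewrite /rank; case: (boolP (pbool (equiv_eff m D))) => // /pboolP /equiv_eff_deg.
by rewrite leNgt Hd.
Qed.

Lemma int_m1_cases (z : int) : -1 <= z -> z = -1 \/ z = (absz z)%:Z.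
Proof. move=> h; case: (ltP z 0) => hz; [left; lia | right; rewrite gez0_abs //]. Qed.

Lemma rank_ge_sub1 (D : divisor V) p s : rank_ge m (add_at D (-1) p) s -> rank_ge m D s.
Proof.
move=> H E HE dE; have := H E HE dE => /equiv_eff_add_eff.
move/(_ (add_at (fun _ => 0) 1 p) (add_at_eff p (fun _ => lexx 0) ler01)).
have -> // : (fun x => sub_div (add_at D (-1) p) E x + add_at (fun _ => 0) 1 p x) = sub_div D E.
by apply: functional_extensionality => x; rewrite /sub_div /add_at; case: eqP => _; ring.
Qed.

Lemma rank_mono (D : divisor V) p : rank m (add_at D (-1) p) <= rank m D.
Proof.
case: (int_m1_cases (rank_ge_m1 (add_at D (-1) p))) => [->|E]; first exact: rank_ge_m1.
rewrite E; apply/(rank_geP p); apply: rank_ge_sub1; apply/(rank_geP p); rewrite -E //.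
Qed.

Lemma Lap_expand c x : Lap c x = \sum_(w : V) (m x w)%:Z * (c w - c x).
Proof.
rewrite /Lap (bigD1 x) //= [RHS](bigD1 x) //= mdiag mul0r add0r /fire eqxx.
under eq_bigr => w /negbTE wx do rewrite eq_sym wx.
rewrite /valence (big_morph Posz PoszD (erefl _)) (bigD1 x) //= mdiag add0r.
rewrite mulrN mulr_sumr -sumrN -big_split; apply: eq_bigr => w wx /=.
ring.
Qed.

Definition indeg (x : V) : nat := (\sum_(y | (enum_rank y < enum_rank x)%N) m x y)%N.
Definition nu : divisor V := fun x => (indeg x)%:Z - 1.

Lemma nu_not_eff (x0 : V) : ~ equiv_eff m nu.
Proof.
case=> F [[c Hc] HF].
case: (@arg_maxP _ _ _ x0 predT c isT) => xm _ Hxm.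
case: (@arg_minnP _ xm (fun y => c y == c xm) (fun y => enum_rank y) (eqxx _)) => x /eqP Hx Hmin.
have := HF x; rewrite Hc -/(Lap c x) Lap_expand /nu /indeg.
rewrite [X in _ + X](bigID (fun w => (enum_rank w < enum_rank x)%N)) /=.
set S1 := \sum_(w | (enum_rank w < enum_rank x)%N) (m x w)%:Z * _.
set S2 := \sum_(w | ~~ (enum_rank w < enum_rank x)%N) (m x w)%:Z * _.
have h1 : S1 <= \sum_(w | (enum_rank w < enum_rank x)%N) - (m x w)%:Z.
  apply: ler_sum => w hw; apply: (@le_trans _ _ ((m x w)%:Z * -1)); last by rewrite mulrN1.
  apply: ler_wpM2l => //.
  have hw1 : c w <= c x by rewrite Hx; apply: Hxm.
  have hw2 : c w != c x.
    apply/negP => /eqP e; move: (Hmin w); rewrite e Hx eqxx => /(_ isT).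
    by rewrite leqNgt hw.
  lia.
have h2 : S2 <= 0.
  apply: sumr_le0 => w _; apply: mulr_ge0_le0 => //.
  rewrite subr_le0 Hx; exact: Hxm.
rewrite sumrN in h1; rewrite sumz.
clearbody S1 S2; move: h1 h2; set T := \sum_(i | _) (m x i)%:Z; clearbody T; lia.
Qed.

Lemma sum_all_indeg : (\sum_(x : V) \sum_(y : V) m x y)%N = (2 * \sum_(x : V) indeg x)%N.
Proof.
have E1 : forall x, (\sum_(y : V) m x y = indeg x + \sum_(y | (enum_rank x < enum_rank y)%N) m x y)%N.
  move=> x; rewrite /indeg [in RHS]big_mkcond [X in (_ + X)%N]big_mkcond -big_split.
  apply: eq_bigr => y _ /=.
  case: (ltngtP (enum_rank y) (enum_rank x)) => h; rewrite ?addn0 ?add0n //.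
  by have := enum_rank_inj (val_inj h) => ->; rewrite mdiag.
under eq_bigr => x _ do rewrite E1.
rewrite big_split /= mul2n -addnn; congr (_ + _)%N.
rewrite /indeg.
under eq_bigr => x _ do rewrite big_mkcond /=.
rewrite exchange_big /=; apply: eq_bigr => y _; rewrite [RHS]big_mkcond /=.
by apply: eq_bigr => x _; rewrite msym.
Qed.

Lemma deg_nu : deg nu = genus m - 1.
Proof.
rewrite /deg /nu sumrB -sumz /genus /num_edges sum_all_indeg mul2n doubleK sumr_const.
by rewrite cardT -cardE natz addrK.
Qed.

Lemma Lap_ind w y : Lap (fun z => ((z == w) : nat)%:Z) y = fire m w y.
Proof.
rewrite /Lap (bigD1 w) //= eqxx mul1r big1 ?addr0 // => z /negbTE ->; by rewrite mul0r.
Qed.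

Definition good (u x : V) := exists c, (forall y, y != u -> 0 <= Lap c y) /\ 1 <= Lap c x.

Lemma good_base u z : z != u -> (0 < m z u)%N -> good u z.
Proof.
move=> zu hm; exists (fun w => ((w == u) : nat)%:Z); split.
  by move=> y /negbTE yu; rewrite Lap_ind /fire yu.
by rewrite Lap_ind /fire (negbTE zu) lez_nat.
Qed.

Lemma good_step u x z : good u x -> z != u -> (0 < m z x)%N -> good u z.
Proof.
case=> c [H1 H2] zu hm.
have zx : z != x by apply/negP => /eqP e; move: hm; rewrite e mdiag.
exists (fun w => (valence m x)%:Z * c w + ((w == x) : nat)%:Z); split.
  move=> y yu; rewrite Lap_add Lap_scale Lap_ind /fire.
  case: (eqVneq y x) => [->|yx].
    have hv : 0 <= (valence m x)%:Z by [].
    have : (valence m x)%:Z <= (valence m x)%:Z * Lap c x.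
      by rewrite -[X in X <= _]mulr1 ler_wpM2l.
    lia.
  by rewrite addr_ge0 // mulr_ge0 // H1.
rewrite Lap_add Lap_scale Lap_ind /fire (negbTE zx).
have : 0 <= (valence m x)%:Z * Lap c z by rewrite mulr_ge0 // H1.
have : 1 <= (m z x)%:Z by rewrite lez_nat.
lia.
Qed.

Lemma path_good u w p : (w == u \/ good u w) ->
  path (fun a b => (0 < m a b)%N) w p -> (last w p == u \/ good u (last w p)).
Proof.
elim: p w => [|a p IH] w Hw //= /andP [hwa Hp]; apply: IH Hp.
case: (eqVneq a u) => [->|au]; first by left.
right; case: Hw => [/eqP e|gw].
  by apply: good_base => //; rewrite msym -e.
by apply: (good_step gw au); rewrite msym.
Qed.

Lemma all_good u : (forall x y, connect (fun a b => (0 < m a b)%N) x y) ->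
  forall x, x != u -> good u x.
Proof.
move=> conn x xu.
suff : x == u \/ good u x by case=> // /eqP e; move: xu; rewrite e eqxx.
have /connectP [p Hp ->] := conn u x.
by apply: path_good => //; left.
Qed.


Lemma good_list u (l : seq V) : (forall x, x != u -> good u x) ->
  exists c, (forall y, y != u -> 0 <= Lap c y) /\ (forall y, y \in l -> y != u -> 1 <= Lap c y).
Proof.
move=> G; elim: l => [|a l [c [H1 H2]]].
  by exists (fun _ => 0); split=> // y _; rewrite Lap0.
case: (eqVneq a u) => [->|au].
  exists c; split=> // y; rewrite inE => /orP [/eqP -> |]; first by rewrite eqxx.
  exact: H2.
have [c' [H1' H2']] := G a au.
exists (fun w => c w + c' w); split.
  by move=> y yu; rewrite Lap_add addr_ge0 ?H1 ?H1'.
move=> y; rewrite inE Lap_add => /orP [/eqP -> _|yl yu].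
  by have := H1 a au; lia.
by have := H2 y yl yu; have := H1' y yu; lia.
Qed.

Lemma eff_shift u (Y : divisor V) : (forall x y, connect (fun a b => (0 < m a b)%N) x y) ->
  exists A : nat, equiv_eff m (add_at Y A%:Z u).
Proof.
move=> conn.
have [c [_ Hc]] := good_list (u:=u) (enum V) (all_good (u:=u) conn).
set N := \sum_(x : V) `|Y x|.
have HN : forall x, - Y x <= N.
  move=> x; rewrite /N (bigD1 x) //=.
  have : 0 <= \sum_(i | i != x) `|Y i| by apply: sumr_ge0.
  have := ler_norm (- Y x); rewrite normrN => h1 h2; apply: (le_trans h1); rewrite lerDl //.
have N0 : 0 <= N by rewrite sumr_ge0.
set c' := fun w => N * c w.
exists (absz (Y u + Lap c' u)).
exists (fun x => add_at Y (absz (Y u + Lap c' u))%:Z u x + Lap c' x); split.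
  by exists c'.
move=> x; rewrite /add_at; case: (eqVneq x u) => [->|xu].
  have := lez_abs (Y u + Lap c' u); lia.
rewrite /c' Lap_scale.
have h1 := Hc x (mem_enum _ x) xu.
have : N <= N * Lap c x by rewrite -[X in X <= _]mulr1 ler_wpM2l.
have := HN x; lia.
Qed.

Lemma rank_bound u (D : divisor V) : (forall x y, connect (fun a b => (0 < m a b)%N) x y) ->
  exists A : nat, rank m (add_at D A%:Z u) <= deg D + A%:Z - genus m.
Proof.
move=> conn; have [A [F [[c Hc] HF]]] := eff_shift u (sub_div D nu) conn.
exists A.
have dF : deg F = deg D + A%:Z - genus m + 1.
  rewrite (@lin_equiv_deg (add_at (sub_div D nu) A u) F); last by exists c.
  rewrite deg_add_at deg_sub deg_nu; ring.
have F0 := eff_deg HF.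
rewrite leNgt; apply/negP => Hr.
have : (absz (deg F))%:Z <= rank m (add_at D A u) by rewrite gez0_abs //; lia.
move/(rank_geP u) => H.
have := H F HF (esym (gez0_abs F0)).
move=> HE; apply: (nu_not_eff u); apply: (equiv_eff_lin _ HE); exists (fun w => - c w) => x.
rewrite -/(Lap _ x) Lap_opp /sub_div Hc -/(Lap c x) /add_at /sub_div; ring.
Qed.
End Basics.

Lemma ind_split (x a : int) :
  ((x <= a)%R : nat)%:Z = ((x == a) : nat)%:Z + ((x <= a - 1)%R : nat)%:Z.
Proof.
case: (boolP (x <= a)) => h1; case: (boolP (x == a)) => h2; case: (boolP (x <= a - 1)) => h3 //=;
  exfalso; move: h1 h2 h3; lia.
Qed.

Definition irange (B : int) (n : nat) : seq int := [seq B + i%:Z | i <- iota 0 n].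

Lemma irangeS B n : irange B n.+1 = rcons (irange B n) (B + n%:Z).
Proof. by rewrite /irange -addn1 iotaD map_cat cats1 add0n. Qed.

Section Trans.
Variables (V : finType) (m : V -> V -> nat).
Hypothesis msym : forall x y, m x y = m y x.
Hypothesis mdiag : forall x, m x x = 0%N.
Variables (u v : V) (D : divisor V) (tau : int -> int).
Hypothesis Htau : forall a b : int, ((tau b == a) : nat)%:Z = Delta m u v (twist u v D a (- b)).

Definition f (a b : int) := rank m (twist u v D a (- b)).

Lemma twist_u a b : add_at (twist u v D a (- b)) (-1) u = twist u v D (a - 1) (- b).
Proof.
apply: functional_extensionality => x; rewrite /twist /add_at.
by case: (x == u); case: (x == v); ring.
Qed.

Lemma twist_v a b : add_at (twist u v D a (- b)) (-1) v = twist u v D a (- (b + 1)).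
Proof.
apply: functional_extensionality => x; rewrite /twist /add_at.
by case: (x == u); case: (x == v); ring.
Qed.

Lemma Delta_f a b : Delta m u v (twist u v D a (- b)) = f a b - f (a - 1) b - f a (b + 1) + f (a - 1) (b + 1).
Proof. by rewrite /Delta /f twist_u !twist_v. Qed.

Lemma deg_twist a b : deg (twist u v D a (- b)) = (deg D) + a - b.
Proof. by rewrite /twist !deg_add_at. Qed.

Lemma f_neg a b : (deg D) + a - b < 0 -> f a b = -1.
Proof. by move=> h; rewrite /f rank_neg // deg_twist. Qed.

Lemma tau_lb b : b - (deg D) <= tau b.
Proof.
rewrite leNgt; apply/negP => h.
have := Htau (tau b) b; rewrite eqxx Delta_f !f_neg; try lia.
Qed.

Lemma K1 A b : f A b - f A (b + 1) = ((tau b <= A)%R : nat)%:Z.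
Proof.
have hlb := tau_lb b.
case: (leP A (b - (deg D) - 1)) => hA.
  by rewrite !f_neg; lia.
have -> : A = (b - (deg D) - 1) + (absz (A - (b - (deg D) - 1))%R)%:Z by rewrite gez0_abs; lia.
elim: (absz _) => [|n IH].
  by rewrite addr0 !f_neg; lia.
have := Htau (b - (deg D) - 1 + n.+1%:Z) b; rewrite Delta_f.
have -> : b - (deg D) - 1 + n.+1%:Z - 1 = b - (deg D) - 1 + n%:Z by rewrite -addn1 PoszD; ring.
rewrite (ind_split (tau b) (b - (deg D) - 1 + n.+1%:Z)).
have -> : b - (deg D) - 1 + n.+1%:Z - 1 = b - (deg D) - 1 + n%:Z by rewrite -addn1 PoszD; ring.
rewrite -IH => ->; ring.
Qed.


Lemma K2 A B n : f A B = (count (fun b => tau b <= A) (irange B n))%:Z + f A (B + n%:Z).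
Proof.
elim: n => [|n IH]; first by rewrite addr0 add0r.
rewrite IH irangeS -cats1 count_cat /= addn0 PoszD -addrA; congr (_ + _).
rewrite -K1; have -> : B + n.+1%:Z = B + n%:Z + 1 by rewrite -addn1 PoszD addrA.
by case: (tau (B + n%:Z) <= A); ring.
Qed.

Lemma K2' A B n : deg D + A - B - n%:Z < 0 -> f A B + 1 = (count (fun b => tau b <= A) (irange B n))%:Z.
Proof. by move=> h; rewrite (K2 A B n) f_neg; [ring | lia]. Qed.

Lemma period (k : nat) :
  lin_equiv m (add_at (fun _ => 0) k%:Z u) (add_at (fun _ => 0) k%:Z v) ->
  forall b, tau (b + k%:Z) = tau b + k%:Z.
Proof.
case=> c Hc.
have fper : forall a b, f (a + k%:Z) (b + k%:Z) = f a b.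
  move=> a b; rewrite /f; symmetry; apply: rank_lin => //.
  exists (fun w => - c w) => x; rewrite -/(Lap m _ x) Lap_opp.
  have := Hc x; rewrite -/(Lap m c x) /twist /add_at.
  case: (x == u); case: (x == v) => /= h; lia.
move=> b; apply/eqP.
have := Htau (tau b + k%:Z) (b + k%:Z); rewrite Delta_f.
have -> : tau b + k%:Z - 1 = tau b - 1 + k%:Z by ring.
have -> : b + k%:Z + 1 = b + 1 + k%:Z by ring.
rewrite !fper -Delta_f -Htau eqxx.
by case: (tau (b + k%:Z) == tau b + k%:Z).
Qed.

End Trans.

Lemma mem_irange x B n : (x \in irange B n) = (B <= x) && (x < B + n%:Z).
Proof.
apply/mapP/andP => [[i]|[h1 h2]].
  rewrite mem_iota add0n => /andP [_ hi] ->; split; first by rewrite lerDl.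
  by rewrite ltrD2l ltz_nat.
exists (absz (x - B)); last by rewrite gez0_abs ?subr_ge0 //; ring.
rewrite mem_iota add0n leq0n /= -ltz_nat gez0_abs ?subr_ge0 //; lia.
Qed.

Lemma irange_uniq B n : uniq (irange B n).
Proof.
rewrite /irange map_inj_uniq ?iota_uniq // => i j /addrI; by case.
Qed.

Lemma irangeD B n1 n2 : irange B (n1 + n2) = irange B n1 ++ irange (B + n1%:Z) n2.
Proof.
rewrite /irange iotaD map_cat add0n; congr (_ ++ _).
rewrite -[n1 in iota n1 n2]addn0 (iotaDl n1 0 n2) -map_comp; apply: eq_map => i /=; rewrite PoszD; ring.
Qed.

Definition keq (k : nat) (p q : int * int) : bool :=
  (p.1 - q.1 == p.2 - q.2) && (k%:Z %| p.1 - q.1)%Z.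

Lemma keqP k p q : k_equiv k p q <-> keq k p q.
Proof. by rewrite /k_equiv /keq; split=> [[/eqP -> ->]|/andP [/eqP -> ->]]. Qed.

Lemma keq_sym k p q : keq k p q -> keq k q p.
Proof.
case/andP => /eqP e h; apply/andP; split.
  by apply/eqP; rewrite -opprB e opprB.
by rewrite -opprB rpredN.
Qed.

Lemma keq_trans k p q r : keq k p q -> keq k q r -> keq k p r.
Proof.
case/andP => /eqP e1 h1 /andP [/eqP e2 h2]; apply/andP; split.
  apply/eqP; have -> : p.1 - r.1 = (p.1 - q.1) + (q.1 - r.1) by ring.
  by rewrite e1 e2; ring.
have -> : p.1 - r.1 = (p.1 - q.1) + (q.1 - r.1) by ring.
by rewrite rpredD.
Qed.

Lemma keq_refl k p : keq k p p.
Proof. by rewrite /keq !subrr eqxx dvdz0. Qed.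

Lemma count_keq_le1 k q0 (s : seq (int * int)) : uniq s ->
  {in s &, forall p q, keq k p q -> p = q} -> (count (fun p => keq k p q0) s <= 1)%N.
Proof.
elim: s => [|p s IH] //= /andP [ps us] H.
have H' : {in s &, forall p q, keq k p q -> p = q}.
  by move=> a b ha hb; apply: H; rewrite inE ?ha ?hb orbT.
case: (boolP (keq k p q0)) => hp /=; last by rewrite add0n IH.
rewrite (@eq_in_count _ _ pred0) ?count_pred0 //.
move=> a ha /=; apply/negbTE/negP => hk.
have e : p = a by apply: H; rewrite ?inE ?eqxx ?ha ?orbT //; apply: keq_trans hp (keq_sym hk).
by move: ps; rewrite e ha.
Qed.

Lemma cover_size k (t s : seq (int * int)) : uniq s ->
  {in s &, forall p q, keq k p q -> p = q} ->
  (forall p, p \in s -> exists2 q, q \in t & keq k p q) -> (size s <= size t)%N.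
Proof.
elim: t s => [|q0 t IH] s us Hs Hc.
  case: s us Hs Hc => [//|p s] _ _ /(_ p (mem_head _ _)) [q]; by rewrite in_nil.
rewrite -(count_predC (fun p => keq k p q0)) -[count (predC _) _]size_filter.
have := count_keq_le1 q0 us Hs.
set s' := filter _ s.
have : (size s' <= size t)%N.
  apply: IH; first by rewrite filter_uniq.
    by move=> a b; rewrite !mem_filter => /andP [_ ha] /andP [_ hb]; apply: Hs.
  move=> p; rewrite mem_filter => /andP [hp ps]; have [q] := Hc p ps.
  rewrite inE => /orP [/eqP ->|qt] hq; first by move: hp; rewrite /= hq.
  by exists q.
simpl; lia.
Qed.

Section Comb.
Variables (tau : int -> int) (k : nat) (g : int).
Hypothesis kpos : (0 < k)%N.
Hypothesis Hper : forall b, tau (b + k%:Z) = tau b + k%:Z.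
Hypothesis Hbij : bijective tau.
Hypothesis Hinv : inv_k_le k tau g.

Lemma per_nat b n : tau (b + (n%:Z * k%:Z)) = tau b + n%:Z * k%:Z.
Proof.
elim: n b => [|n IH] b; first by rewrite !mul0r !addr0.
have -> : n.+1%:Z * k%:Z = n%:Z * k%:Z + k%:Z by rewrite -addn1 PoszD mulrDl mul1r.
by rewrite addrA Hper IH addrA.
Qed.

Lemma per_int b j : tau (b + j * k%:Z) = tau b + j * k%:Z.
Proof.
case: (leP 0 j) => hj.
  by rewrite -(gez0_abs hj) per_nat.
have := per_nat (b + j * k%:Z) (absz j).
rewrite ltz0_abs // mulNr addrK => ->; ring.
Qed.

Lemma tau_ub : exists M, forall b, tau b <= b + M.
Proof.
have [M HM] : exists M, forall i : nat, (i < k)%N -> tau i%:Z - i%:Z <= M.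
  elim: k => [|n [M HM]]; first by exists 0.
  exists (Num.max M (tau n%:Z - n%:Z)) => i; rewrite ltnS leq_eqVlt => /orP [/eqP ->|hi].
    by rewrite le_max lexx orbT.
  by rewrite le_max HM.
exists M => b.
have k0 : k%:Z != 0 by rewrite eqz_nat -lt0n.
have hr := modz_ge0 b k0.
have hr2 : (b %% k%:Z)%Z < k%:Z by apply: ltz_pmod; rewrite ltz_nat.
rewrite {1 2}(divz_eq b k%:Z) addrC per_int.
have := HM (absz (b %% k%:Z)%Z); rewrite gez0_abs // -ltz_nat gez0_abs // => /(_ hr2).
lia.
Qed.

Lemma inv_size (s : seq (int * int)) : uniq s -> (forall p, p \in s -> inversion tau p) ->
  {in s &, forall p q, keq k p q -> p = q} -> (size s)%:Z <= g.
Proof.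
move=> us Hs Hq; case: Hinv => t [ht [_ Hc]].
apply: le_trans ht; rewrite lez_nat; apply: (cover_size us Hq) => p ps.
by have [q qt /keqP hq] := Hc p (Hs p ps); exists q.
Qed.

Lemma small_dvd (z : int) : (k%:Z %| z)%Z -> - k%:Z < z -> z < k%:Z -> z = 0.
Proof.
case/dvdzP => q -> h1 h2; have k0 : 0 <= k%:Z by [].
case: (ltgtP q 0) => hq.
- have : q * k%:Z <= - k%:Z.
    by rewrite -mulN1r ler_wpM2r //; lia.
  lia.
- have : k%:Z <= q * k%:Z.
    by rewrite -[X in X <= _]mul1r ler_wpM2r //; lia.
  lia.
- by rewrite hq mul0r.
Qed.


Lemma comb_ab (P Q : seq int) : uniq P -> uniq Q ->
  (forall p, p \in P -> 0 <= p /\ tau p <= 0) -> (forall q, q \in Q -> q < 0 /\ 0 < tau q) ->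
  ((forall p, p \in P -> p < k%:Z) \/ (forall q, q \in Q -> - k%:Z <= q)) ->
  ((size P * size Q)%N)%:Z <= g.
Proof.
move=> uP uQ HP HQ Hc.
have := @inv_size [seq (q, p) | q <- Q, p <- P].
rewrite size_allpairs mulnC; apply.
- by apply: allpairs_uniq => // [[a b] [c d]] _ _ /= [-> ->].
- move=> z /allpairsP [[q p] [hq hp ->]] /=.
  have := HP p hp; have := HQ q hq; rewrite /inversion /=; lia.
- move=> z1 z2 /allpairsP [[q p] [hq hp ->]] /allpairsP [[q' p'] [hq' hp' ->]] /=.
  case/andP => /= /eqP e hd.
  have := HP p hp; have := HP p' hp'; have := HQ q hq; have := HQ q' hq' => h1 h2 h3 h4.
  case: Hc => Hc.
  + have := Hc p hp; have := Hc p' hp' => h5 h6.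
    have z0 : p - p' = 0 by apply: small_dvd; rewrite -?e //; lia.
    have zz : q - q' = 0 by rewrite e.
    by congr (_, _); lia.
  + have := Hc q hq; have := Hc q' hq' => h5 h6.
    have z0 : q - q' = 0 by apply: small_dvd => //; lia.
    have zz : p - p' = 0 by rewrite -e.
    by congr (_, _); lia.
Qed.


Lemma comb_c p q : tau p <= 0 -> k%:Z <= p -> 0 < tau q -> q < - k%:Z ->
  2 * k%:Z - 1 <= g.
Proof.
move=> hp1 hp2 hq1 hq2.
case: Hbij => ti tiK tauK.
set x := q + k%:Z; set y := p - k%:Z.
have hx : tau x = tau q + k%:Z by rewrite /x Hper.
have hy : tau y = tau p - k%:Z by rewrite -[in RHS](subrK k%:Z p) Hper; ring.
have xy : x < y by rewrite /x /y; lia.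
set I := [seq i <- iota 1 (2 * k).-1 | i != k].
set S := [seq tau y + i%:Z | i <- I].
have memS : forall w, w \in S -> exists i : nat, [/\ (1 <= i)%N, (i < 2 * k)%N, i != k & w = tau y + i%:Z].
  move=> w /mapP [i]; rewrite mem_filter mem_iota => /andP [ik /andP [h1 h2]] ->.
  exists i; split => //; lia.
have Sb : forall w, w \in S -> tau y < w /\ w < tau x.
  move=> w /memS [i [h1 h2 h3 ->]]; split; first by rewrite ltrDl ltz_nat.
  rewrite hx hy; have : (i%:Z < 2 * k%:Z) by rewrite -PoszM ltz_nat.
  lia.
set io := fun w => if ti w < y then (ti w, y) else (x, ti w).
have cross : forall w w', w \in S -> w' \in S -> ti w < y -> ~~ (ti w' < y) ->
    ~~ keq k (ti w, y) (x, ti w').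
  move=> w w' hw hw' h1 h2; apply/negP => /andP [/eqP /= e hd].
  case/dvdzP: hd => j hj.
  have : ti w' = y + (- j) * k%:Z by rewrite mulNr -hj e; ring.
  move/(congr1 tau); rewrite tauK per_int hy => ew'.
  have [i [i1 i2 i3 ei]] := memS w' hw'.
  have ej : i%:Z = - j * k%:Z by move: ew'; rewrite ei hy; lia.
  have kz : 0 < k%:Z by rewrite ltz_nat.
  case: (ltgtP (- j) 1) => hj1.
  - have : - j * k%:Z <= 0.
      by rewrite mulr_le0_ge0 //; lia.
    lia.
  - have : 2 * k%:Z <= - j * k%:Z by rewrite ler_wpM2r //; lia.
    have : (i%:Z < 2 * k%:Z) by rewrite -PoszM ltz_nat.
    lia.
  - by move: ej i3; rewrite hj1 mul1r => /eqP; rewrite eqz_nat => ->.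
have keqS : forall w w', w \in S -> w' \in S -> keq k (io w) (io w') -> w = w'.
  move=> w w' hw hw'; rewrite /io.
  case: (boolP (ti w < y)) => h1; case: (boolP (ti w' < y)) => h2.
  - case/andP => /eqP /= e _; rewrite -(tauK w) -(tauK w'); congr tau; lia.
  - by move=> hk; move: (cross w w' hw hw' h1 h2); rewrite hk.
  - by move/keq_sym => hk; move: (cross w' w hw' hw h2 h1); rewrite hk.
  - case/andP => /eqP /= e _; rewrite -(tauK w) -(tauK w'); congr tau; lia.
have keqxy : forall w, w \in S -> ~~ keq k (x, y) (io w).
  move=> w hw; have [s1 s2] := Sb w hw; rewrite /io.
  case: (boolP (ti w < y)) => h1; apply/negP => /andP [/eqP /= e _].
  - have : x = ti w by lia.
    by move/(congr1 tau); rewrite tauK => ex; move: s2; rewrite -ex ltxx.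
  - have : y = ti w by lia.
    by move/(congr1 tau); rewrite tauK => ey; move: s1; rewrite -ey ltxx.
have sizeI : size I = (2 * k - 2)%N.
  rewrite size_filter.
  have := count_predC (pred1 k) (iota 1 (2 * k).-1); rewrite size_iota.
  rewrite (count_uniq_mem _ (iota_uniq _ _)) mem_iota.
  have -> : (1 <= k < 1 + (2 * k).-1)%N by apply/andP; split; lia.
  rewrite /= => h.
  have -> : count (fun i => i != k) (iota 1 (2 * k).-1) = count (predC (pred1 k)) (iota 1 (2 * k).-1).
    by apply: eq_count => i.
  move: h; set c := count _ _; rewrite -subn1; clearbody c; lia.
have := @inv_size ((x, y) :: [seq io w | w <- S]).
have uS : uniq S.
  rewrite /S map_inj_uniq ?filter_uniq ?iota_uniq //.
  by move=> i j /addrI; case.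
have -> : size ((x, y) :: [seq io w | w <- S]) = (2 * k - 1)%N.
  by rewrite /= size_map size_map sizeI; lia.
move=> H; have : (2 * k - 1)%N%:Z <= g.
  apply: H.
  - rewrite /= map_inj_in_uniq; last first.
      by move=> w w' hw hw' e; apply: keqS => //; rewrite e keq_refl.
    rewrite uS andbT; apply/negP => /mapP [w hw e].
    by have := keqxy w hw; rewrite -e keq_refl.
  - move=> z; rewrite inE => /orP [/eqP ->|/mapP [w hw ->]].
      rewrite /inversion /=; split => //; rewrite hx hy; lia.
    have [s1 s2] := Sb w hw; rewrite /io /inversion.
    case: (boolP (ti w < y)) => h1 /=; rewrite tauK; split => //.
    have : ti w != y by apply/eqP => e; move: s1; rewrite -e tauK ltxx.
    lia.
  - move=> z1 z2; rewrite !inE => /orP [/eqP ->|/mapP [w hw ->]] /orP [/eqP ->|/mapP [w' hw' ->]] //.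
    + by move=> hk; move: (keqxy w' hw'); rewrite hk.
    + by move/keq_sym => hk; move: (keqxy w hw); rewrite hk.
    + by move/(keqS w w' hw hw') => ->.
have : (1 <= 2 * k)%N by lia.
lia.
Qed.

End Comb.

Lemma count_split (tau : int -> int) (A : int) (s : seq int) : 0 <= A ->
  (count (fun b => (0 < tau b)%R && (tau b <= A)%R) s + count (fun b => (tau b <= 0)%R) s
   = count (fun b => (tau b <= A)%R) s)%N.
Proof.
move=> hA; elim: s => [|b s IH] //=.
rewrite -IH; case: (ltP 0 (tau b)) => h1 /=; case: (boolP (tau b <= A)) => h2 /=; lia.
Qed.

Lemma count_bij (tau : int -> int) (A : nat) (d M : int) (n2 : nat) :
  bijective tau -> (forall b, b - d <= tau b) -> (forall b, tau b <= b + M) ->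
  0 <= M -> d + A%:Z < n2%:Z ->
  count (fun b => (0 < tau b) && (tau b <= A%:Z)) (irange (- M) (absz M + n2)) = A.
Proof.
move=> Hbij lb ub M0 hn.
rewrite -size_filter.
set L := filter _ _.
have uL : uniq (map tau L) by rewrite map_inj_uniq ?filter_uniq ?irange_uniq //; apply: bij_inj.
have : perm_eq (map tau L) (irange 1 A).
  apply: uniq_perm => //; first by apply: irange_uniq.
  move=> w; rewrite mem_irange; apply/mapP/andP => [[b]|[h1 h2]].
    by rewrite mem_filter => /andP [/andP [h1 h2] _] ->; split => //; lia.
  case: Hbij => ti tiK tauK.
  exists (ti w); last by rewrite tauK.
  rewrite mem_filter tauK mem_irange; apply/andP; split; first by apply/andP; split; lia.
  have := lb (ti w); have := ub (ti w); rewrite tauK PoszD gez0_abs //; lia.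
by move/perm_size; rewrite size_map /irange size_map size_iota.
Qed.

Theorem mainTheorem8 (V : finType) (m : V -> V -> nat) (u v : V) (k : nat) :
  is_graph m ->
  k_general_transmission m u v k ->
  genus m + 2 <= 2 * (k%:Z) ->
  BN_general m.
Proof.
move=> [msym mdiag conn] [Hlin Hsub Htr] Hk D r r0 hr.
have g0 : 0 <= genus m.
  have [tau0 [_ [s [hs _]]]] := Htr (fun _ => 0).
  by apply: le_trans hs.
have kpos : (0 < k)%N by rewrite -ltz_nat; lia.
have [tau [[Hbij Htau] Hinv]] := Htr D.
set g := genus m in Hk g0 Hinv *.
have R0 : 0 <= rank m D by lia.
have HD : equiv_eff m D.
  by apply/rank_ge0; apply/(rank_geP msym mdiag u).
have d0 := equiv_eff_deg msym mdiag HD.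
set d := deg D in d0 *.
have Hper := period msym mdiag Htau Hlin.
have lb := tau_lb msym mdiag Htau.
have [M0 HM0] := tau_ub kpos Hper.
set M1 := absz M0.
have ub : forall b, tau b <= b + M1%:Z.
  move=> b; have := HM0 b; have := lez_abs M0; rewrite /M1; lia.
have [A hA] := rank_bound msym mdiag u D conn.
have fA : f m u v D A%:Z 0 = rank m (add_at D A%:Z u).
  rewrite /f /twist oppr0; congr (rank m _); apply: functional_extensionality => x.
  by rewrite /add_at; case: (x == v); ring.
have f00 : f m u v D 0 0 = rank m D.
  rewrite /f /twist oppr0; congr (rank m _); apply: functional_extensionality => x.
  by rewrite /add_at; case: (x == v); case: (x == u); ring.
set n2 := (absz (d + A%:Z)).+1.
have hn2 : d + A%:Z < n2%:Z by rewrite /n2 -addn1 PoszD gez0_abs; lia.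
set P := filter (fun b => tau b <= 0) (irange 0 n2).
set Q := filter (fun b => 0 < tau b) (irange (- M1%:Z) M1).
have sP : (size P)%:Z = rank m D + 1.
  rewrite size_filter -f00 (K2' msym mdiag Htau (A:=0) (B:=0) (n:=n2)) //; lia.
have cA : (count (fun b => tau b <= A%:Z) (irange 0 n2))%:Z = f m u v D A%:Z 0 + 1.
  rewrite (K2' msym mdiag Htau (A:=A%:Z) (B:=0) (n:=n2)) //; lia.
have cB := count_bij Hbij lb ub (le0z_nat M1) hn2.
rewrite irangeD count_cat in cB.
have e0 : - M1%:Z + M1%:Z = 0 by ring.
rewrite e0 (_ : absz M1%:Z = M1) // in cB.
have cs := count_split tau (irange 0 n2) (le0z_nat A).
have cQ : (count (fun b => (0 < tau b)%R && (tau b <= A%:Z)%R) (irange (- M1%:Z) M1) <= size Q)%N.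
  by rewrite size_filter; apply: sub_count => b /andP [].
have sP' : size P = count (fun b => (tau b <= 0)%R) (irange 0 n2) by rewrite size_filter.
have sQ : g - d + rank m D <= (size Q)%:Z.
  move: cB cs cQ sP' sP cA hA fA.
  set c1 := count _ (irange (- M1%:Z) M1).
  set c2 := count _ (irange 0 n2).
  set c3 := count _ (irange 0 n2).
  set c4 := count _ (irange 0 n2).
  lia.
have HP : forall p, p \in P -> 0 <= p /\ tau p <= 0.
  by move=> p; rewrite mem_filter mem_irange => /andP [h /andP [h1 _]].
have HQ : forall q, q \in Q -> q < 0 /\ 0 < tau q.
  by move=> q; rewrite mem_filter mem_irange => /andP [h /andP [_ h1]]; split => //; lia.
have uP : uniq P by rewrite filter_uniq ?irange_uniq.
have uQ : uniq Q by rewrite filter_uniq ?irange_uniq.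
have prod : ((size P * size Q)%N)%:Z <= g.
  case: (boolP (all (fun p => p < k%:Z) P)) => [/allP hP|/allPn [p pP hp]].
    by apply: (comb_ab kpos Hinv uP uQ HP HQ); left.
  case: (boolP (all (fun q => - k%:Z <= q) Q)) => [/allP hQ|/allPn [q qQ hq]].
    by apply: (comb_ab kpos Hinv uP uQ HP HQ); right.
  exfalso.
  have [_ h1] := HP p pP; have [_ h2] := HQ q qQ.
  have h3 : k%:Z <= p by rewrite leNgt.
  have h4 : q < - k%:Z by rewrite ltNge.
  have := comb_c kpos Hper Hbij Hinv h1 h3 h2 h4.
  lia.
rewrite PoszM sP in prod.
have Q0 : 0 <= (size Q)%:Z by [].
case: (lerP (g - d + r) 0) => h.
  have : (r + 1) * (g - d + r) <= 0 by rewrite mulr_ge0_le0 //; lia.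
  lia.
have : (r + 1) * (g - d + r) <= (rank m D + 1) * (size Q)%:Z.
  apply: ler_pM; lia.
lia.
Qed.
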